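(* Let $\beta_1,\beta_2,\gamma,\rho_1,\rho_2>0$, let $\sigma_1,\sigma_2>0$ with $\sigma_1+\sigma_2=1$, let $q\in[0,1]$ and $T>0$. Let $s_0,e_0,i_0,j_0>0$ and $r_0\ge 0$ satisfy $s_0+e_0+i_0+j_0+r_0=1$. Consider the system \[ \begin{aligned} s'&=-s\,(\beta_1 i+\beta_2 j),\\ e'&=s\,(\beta_1 i+\beta_2 j)-\gamma e,\\ i'&=\sigma_1\gamma e-\rho_1 i,\\ j'&=\sigma_2\gamma e-\rho_2 j,\\ r'&=\rho_1 i+(1-q)\rho_2 j,\\ n'&=-q\rho_2 j, \end{aligned} \] on $[0,T]$ with initial conditions $s(0)=s_0$, $e(0)=e_0$, $i(0)=i_0$, $j(0)=j_0$, $r(0)=r_0$, $n(0)=1$. Let $s(t),e(t),i(t),j(t),r(t),n(t)$ be solutions of this system with these initial conditions. Then these solutions are defined on the entire interval $[0,T]$, and for all $t\in(0,T]$ they are positive and bounded. *)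

(* Defs.v *)
From Stdlib Require Import Reals.
From Coquelicot Require Import Coquelicot.
Open Scope R_scope.

Definition cont_on_0T (T : R) (f : R -> R) : Prop :=
  forall t, 0 <= t <= T ->
    filterlim f (within (fun x => 0 <= x <= T) (locally t)) (locally (f t)).

Definition is_solution
  (beta1 beta2 gamma rho1 rho2 sigma1 sigma2 q T : R)
  (s0 e0 i0 j0 r0 : R)
  (s e i j r n : R -> R) : Prop :=
  cont_on_0T T s /\ cont_on_0T T e /\ cont_on_0T T i /\
  cont_on_0T T j /\ cont_on_0T T r /\ cont_on_0T T n /\
  (forall t, 0 < t < T ->
     is_derive s t (- s t * (beta1 * i t + beta2 * j t)) /\
     is_derive e t (s t * (beta1 * i t + beta2 * j t) - gamma * e t) /\
     is_derive i t (sigma1 * gamma * e t - rho1 * i t) /\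
     is_derive j t (sigma2 * gamma * e t - rho2 * j t) /\
     is_derive r t (rho1 * i t + (1 - q) * rho2 * j t) /\
     is_derive n t (- q * rho2 * j t)) /\
  s 0 = s0 /\ e 0 = e0 /\ i 0 = i0 /\ j 0 = j0 /\ r 0 = r0 /\ n 0 = 1.

Definition pos_on (T : R) (f : R -> R) : Prop :=
  forall t, 0 < t <= T -> 0 < f t.

Definition bounded_on (T : R) (f : R -> R) : Prop :=
  exists M, forall t, 0 < t <= T -> Rabs (f t) <= M.

(* Main.v *)
Require Import Defs.
From Stdlib Require Import Reals Lra Lia Classical.
From Coquelicot Require Import Coquelicot.
Open Scope R_scope.

Definition clamp (a b x : R) := Rmax a (Rmin b x).

Lemma clamp_in a b x : a <= b -> a <= clamp a b x <= b.
Proof. intros. unfold clamp, Rmax, Rmin. repeat destruct Rle_dec; lra. Qed.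

Lemma clamp_id a b x : a <= x <= b -> clamp a b x = x.
Proof. intros. unfold clamp, Rmax, Rmin. repeat destruct Rle_dec; lra. Qed.

Lemma clamp_lip a b x y : a <= b -> Rabs (clamp a b x - clamp a b y) <= Rabs (x - y).
Proof. intros. unfold clamp, Rmax, Rmin. repeat destruct Rle_dec; unfold Rabs; repeat destruct Rcase_abs; lra. Qed.

Definition contI (a b : R) (f : R -> R) : Prop :=
  forall t, a <= t <= b ->
    filterlim f (within (fun x => a <= x <= b) (locally t)) (locally (f t)).

Definition ccont (a b : R) (f : R -> R) : Prop :=
  forall x, continuous (fun y => f (clamp a b y)) x.

Lemma lip_cont (f : R -> R) K x : 0 <= K -> (forall y, Rabs (f y - f x) <= K * Rabs (y - x)) ->
  continuous f x.
Proof.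
  intros HK H. apply filterlim_locally. intros eps.
  assert (Hd : 0 < eps / (K + 1)).
  { apply Rdiv_lt_0_compat. destruct eps; simpl; lra. lra. }
  exists (mkposreal _ Hd). intros y Hy. 
  change (Rabs (f y - f x) < eps).
  unfold ball in Hy; simpl in Hy; unfold AbsRing_ball, abs, minus, plus, opp in Hy; simpl in Hy.
  specialize (H y). destruct eps as [e He]; simpl in *.
  apply Rle_lt_trans with (1 := H).
  assert (Rabs (y - x) * (K+1) < e).
  { apply (Rmult_lt_compat_r (K+1)) in Hy; [|lra]. unfold Rdiv in Hy.
    rewrite Rmult_assoc, Rinv_l, Rmult_1_r in Hy by lra. exact Hy. }
  pose proof (Rabs_pos (y - x)).
  assert (K * Rabs (y - x) <= Rabs (y - x) * (K+1)) by nra. lra.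
Qed.

Lemma contI_ccont a b f : a <= b -> contI a b f -> ccont a b f.
Proof.
  intros Hab H x.
  pose proof (clamp_in a b x Hab) as Hc.
  specialize (H (clamp a b x) Hc).
  intros P HP. specialize (H P HP).
  destruct H as [eps He].
  exists eps. intros y Hy. apply He.
  - unfold ball in *; simpl in *; unfold AbsRing_ball, abs, minus, plus, opp in *; simpl in *.
    eapply Rle_lt_trans. apply clamp_lip. auto. auto.
  - apply clamp_in; auto.
Qed.

Lemma contI_sub a b a' b' f : a <= a' -> b' <= b -> contI a b f -> contI a' b' f.
Proof.
  intros H1 H2 H t Ht P HP.
  assert (Ht' : a <= t <= b) by lra.
  specialize (H t Ht' P HP). destruct H as [eps He].
  exists eps. intros y Hy Hy'. apply He; auto. lra.
Qed.

Lemma mvt_within f df a b : a < b -> ccont a b f ->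
  (forall c, a < c < b -> is_derive f c (df c)) ->
  exists c, a < c < b /\ f b - f a = df c * (b - a).
Proof.
  intros Hab Hc Hd.
  set (g := fun y => f (clamp a b y)).
  assert (Hg : forall c, a < c < b -> derivable_pt_lim g c (df c)).
  { intros c Hc'. apply is_derive_Reals.
    apply is_derive_ext_loc with f; [|apply Hd; auto].
    assert (He : 0 < Rmin (c - a) (b - c)).
    { apply Rmin_case; lra. }
    exists (mkposreal _ He). intros y Hy.
    unfold ball in Hy; simpl in Hy; unfold AbsRing_ball, abs, minus, plus, opp in Hy; simpl in Hy.
    unfold g. rewrite clamp_id; auto.
    revert Hy. apply Rmin_case_strong; intros; unfold Rabs in *; destruct Rcase_abs; lra. }
  assert (pr1 : forall c, a < c < b -> derivable_pt g c).
  { intros c Hc'. exists (df c). apply Hg; auto. }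
  assert (pr2 : forall c, a < c < b -> derivable_pt id c).
  { intros c _. apply derivable_pt_id. }
  destruct (MVT g id a b pr1 pr2 Hab) as [c [P HP]].
  - intros c _. apply continuity_pt_filterlim. apply Hc.
  - intros c _. apply derivable_continuous_pt. apply derivable_pt_id.
  - exists c. split; auto.
    rewrite (derive_pt_eq_0 g c (df c) (pr1 c P) (Hg c P)) in HP.
    rewrite (derive_pt_eq_0 id c 1 (pr2 c P)) in HP by apply derivable_pt_lim_id.
    unfold g, id in HP. rewrite !clamp_id in HP by lra. lra.
Qed.

Lemma incr f df a b : a < b -> ccont a b f ->
  (forall c, a < c < b -> is_derive f c (df c)) ->
  (forall c, a < c < b -> 0 <= df c) -> f a <= f b.
Proof.
  intros Hab Hc Hd Hp. destruct (mvt_within f df a b Hab Hc Hd) as [c [Hc1 Hc2]].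
  specialize (Hp c Hc1). nra.
Qed.

Lemma ccont_mult a b f g : ccont a b f -> ccont a b g -> ccont a b (fun t => f t * g t).
Proof. intros Hf Hg x. apply (continuous_mult (fun y => f (clamp a b y)) (fun y => g (clamp a b y))); auto. Qed.

Lemma ccont_plus a b f g : ccont a b f -> ccont a b g -> ccont a b (fun t => f t + g t).
Proof. intros Hf Hg x. apply (continuous_plus (fun y => f (clamp a b y)) (fun y => g (clamp a b y))); auto. Qed.

Lemma ccont_minus a b f g : ccont a b f -> ccont a b g -> ccont a b (fun t => f t - g t).
Proof. intros Hf Hg x. apply (continuous_minus (fun y => f (clamp a b y)) (fun y => g (clamp a b y))); auto. Qed.

Lemma clamp_cont a b x : a <= b -> continuous (clamp a b) x.
Proof. intros. apply lip_cont with 1; [lra|]. intros y. rewrite Rmult_1_l. apply clamp_lip; auto. Qed.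

Lemma ccont_glob a b f : a <= b -> (forall x, continuous f x) -> ccont a b f.
Proof. intros Hab H x. apply (continuous_comp (clamp a b) f). apply clamp_cont; auto. apply H. Qed.

Lemma ccont_exp a b K : a <= b -> ccont a b (fun t => exp (K * t)).
Proof. intros Hab. apply ccont_glob; auto. intros x.
  apply continuous_exp_comp. apply lip_cont with (Rabs K). apply Rabs_pos.
  intros y. rewrite <- Rabs_mult. right. f_equal. ring. Qed.

Lemma contI_open a b f t lo hi : contI a b f -> a <= t < b -> lo < f t < hi ->
  exists d, 0 < d /\ forall u, t <= u < t + d -> lo < f u < hi.
Proof.
  intros H Ht Hf.
  assert (He : 0 < Rmin (f t - lo) (hi - f t)) by (apply Rmin_case; lra).
  assert (Ht' : a <= t <= b) by lra.
  specialize (H t Ht' (ball (f t) (mkposreal _ He)) (locally_ball _ _)).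
  destruct H as [eps Heps].
  exists (Rmin eps (b - t)). split. { apply Rmin_case; [apply cond_pos|lra]. }
  intros u Hu.
  assert (Hu1 : u < t + eps) by (eapply Rlt_le_trans; [apply Hu|]; apply Rplus_le_compat_l, Rmin_l).
  assert (Hu2 : u < b) by (assert (Rmin eps (b - t) <= b - t) by apply Rmin_r; lra).
  specialize (Heps u). 
  assert (Hb : ball t eps u).
  { unfold ball; simpl; unfold AbsRing_ball, abs, minus, plus, opp; simpl.
    unfold Rabs; destruct Rcase_abs; lra. }
  specialize (Heps Hb ltac:(lra)).
  unfold ball in Heps; simpl in Heps; unfold AbsRing_ball, abs, minus, plus, opp in Heps; simpl in Heps.
  revert Heps. apply Rmin_case_strong; intros; unfold Rabs in *; destruct Rcase_abs; lra.
Qed.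

Lemma cont_induction (T : R) (Q : R -> Prop) : 0 <= T -> Q 0 ->
  (forall t, 0 < t <= T -> (forall u, 0 <= u < t -> Q u) -> Q t) ->
  (forall t, 0 <= t < T -> Q t -> exists d, 0 < d /\ forall u, t <= u < t + d -> Q u) ->
  forall t, 0 <= t <= T -> Q t.
Proof.
  intros HT H0 Hcl Hop.
  set (E := fun x => 0 <= x <= T /\ forall u, 0 <= u <= x -> Q u).
  assert (HE : bound E). { exists T. intros x [Hx _]. lra. }
  assert (HE0 : exists x, E x). { exists 0. split. lra. intros u Hu. replace u with 0 by lra. auto. }
  destruct (completeness E HE HE0) as [m [Hub Hlub]].
  assert (Hm0 : 0 <= m). { apply Hub. split. lra. intros u Hu. replace u with 0 by lra. auto. }
  assert (HmT : m <= T). { apply Hlub. intros x [Hx _]. lra. }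
  assert (Hbelow : forall u, 0 <= u < m -> Q u).
  { intros u Hu. destruct (Rle_dec m u) as [Hle|Hnle]. lra.
    assert (exists x, E x /\ u < x) as [x [[Hx1 Hx2] Hx3]].
    { apply Rnot_le_lt in Hnle. destruct (classic (exists x, E x /\ u < x)) as [?|Hn]; auto.
      exfalso. assert (m <= u). { apply Hlub. intros x Hx. destruct (Rle_dec x u); auto.
      exfalso. apply Hn. exists x. split; auto. lra. } lra. }
    apply Hx2. lra. }
  assert (Hm : Q m). { destruct (Req_dec m 0) as [->|]. auto. apply Hcl. lra. auto. }
  assert (HEm : E m). { split. lra. intros u Hu. destruct (Req_dec u m) as [->|]. auto. apply Hbelow. lra. }
  destruct (Req_dec m T) as [HmTe|HmT'].
  - intros t Ht. apply (proj2 HEm). lra.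
  - exfalso. destruct (Hop m ltac:(lra) Hm) as [d [Hd Hd']].
    set (x := Rmin (m + d/2) T).
    assert (Ex : E x).
    { split. split. unfold x; apply Rmin_case; lra. apply Rmin_r.
      intros u Hu. destruct (Rle_dec u m). apply HEm; lra. apply Hd'.
      assert (x <= m + d/2) by apply Rmin_l. lra. }
    assert (m < x). { unfold x; apply Rmin_case; lra. }
    specialize (Hub x Ex). lra.
Qed.

Lemma is_derive_eq (f : R -> R) x l l' : is_derive f x l -> l = l' -> is_derive f x l'.
Proof. intros H <-. exact H. Qed.

Ltac fixeq := match goal with |- @eq _ ?a ?b => change (@eq R a b) end.

Lemma grow f df K t : 0 < t -> ccont 0 t f ->
  (forall c, 0 < c < t -> is_derive f c (df c)) ->
  (forall c, 0 < c < t -> 0 <= df c + K * f c) -> 0 < f 0 -> 0 < f t.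
Proof.
  intros Ht Hc Hd Hp H0.
  assert (Hinc : f 0 * exp (K * 0) <= f t * exp (K * t)).
  { apply (incr (fun u => f u * exp (K * u)) (fun c => (df c + K * f c) * exp (K * c))).
    - auto.
    - apply ccont_mult; auto. apply ccont_exp. lra.
    - intros c Hc'. eapply is_derive_eq.
      + apply (is_derive_mult f (fun u => exp (K * u))). apply Hd; auto.
        auto_derive; auto. intros; apply Rmult_comm.
      + simpl. unfold plus, mult; simpl. ring.
    - intros c Hc'. apply Rmult_le_pos. apply Hp; auto. left; apply exp_pos. }
  rewrite Rmult_0_r, exp_0, Rmult_1_r in Hinc.
  pose proof (exp_pos (K * t)).
  destruct (Rle_or_lt (f t) 0); [|auto]. nra.
Qed.

Lemma is_derive_add (f g : R -> R) x df dg : is_derive f x df -> is_derive g x dg ->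
  is_derive (fun u => f u + g u) x (df + dg).
Proof. intros. apply (is_derive_plus f g); auto. Qed.

Lemma is_derive_sub (f g : R -> R) x df dg : is_derive f x df -> is_derive g x dg ->
  is_derive (fun u => f u - g u) x (df - dg).
Proof. intros. apply (is_derive_minus f g); auto. Qed.

Lemma is_derive_sum5 (f1 f2 f3 f4 f5 : R -> R) x d1 d2 d3 d4 d5 :
  is_derive f1 x d1 -> is_derive f2 x d2 -> is_derive f3 x d3 -> is_derive f4 x d4 -> is_derive f5 x d5 ->
  is_derive (fun u => f1 u + f2 u + f3 u + f4 u + f5 u) x (d1 + d2 + d3 + d4 + d5).
Proof.
  intros.
  apply (is_derive_add (fun u => f1 u + f2 u + f3 u + f4 u) f5); auto.
  apply (is_derive_add (fun u => f1 u + f2 u + f3 u) f4); auto.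
  apply (is_derive_add (fun u => f1 u + f2 u) f3); auto.
  apply is_derive_add; auto.
Qed.

Section POS.
Variables (beta1 beta2 gamma rho1 rho2 sigma1 sigma2 q s0 e0 i0 j0 r0 : R).
Hypotheses (Hb1 : 0 < beta1) (Hb2 : 0 < beta2) (Hg : 0 < gamma)
  (Hr1 : 0 < rho1) (Hr2 : 0 < rho2)
  (Hs1 : 0 < sigma1) (Hs2 : 0 < sigma2) (Hsig : sigma1 + sigma2 = 1)
  (Hq : 0 <= q <= 1)
  (Hs0 : 0 < s0) (He0 : 0 < e0) (Hi0 : 0 < i0) (Hj0 : 0 < j0) (Hr0 : 0 <= r0)
  (Hsum : s0 + e0 + i0 + j0 + r0 = 1).

Lemma POS T s e i j r n : 0 < T ->
  is_solution beta1 beta2 gamma rho1 rho2 sigma1 sigma2 q T s0 e0 i0 j0 r0 s e i j r n ->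
  forall t, 0 <= t <= T ->
    (0 < s t /\ 0 < e t /\ 0 < i t /\ 0 < j t) /\ 0 <= r t /\
    n t = s t + e t + i t + j t + r t /\ n t <= 1.
Proof.
  intros HT (cs & ce & ci & cj & cr & cn & Hder & E0s & E0e & E0i & E0j & E0r & E0n).
  assert (CC : forall f t, contI 0 T f -> 0 < t <= T -> ccont 0 t f).
  { intros f t Hf Ht. apply contI_ccont. lra. apply contI_sub with 0 T; auto; lra. }
  assert (Hid : forall t, 0 <= t <= T -> n t = s t + e t + i t + j t + r t).
  { intros t Ht. destruct (Req_dec t 0) as [->|Ht0].
    { rewrite E0s, E0e, E0i, E0j, E0r, E0n. lra. }
    set (h := fun u => n u - (s u + e u + i u + j u + r u)).
    destruct (mvt_within h (fun _ => 0) 0 t) as [c [Hc1 Hc2]].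
    - lra.
    - unfold h. apply ccont_minus. apply CC; auto; lra.
      repeat apply ccont_plus; apply CC; auto; lra.
    - intros c Hc. destruct (Hder c ltac:(lra)) as (Ds & De & Di & Dj & Dr & Dn).
      unfold h. eapply is_derive_eq.
      apply (is_derive_sub n (fun u => s u + e u + i u + j u + r u)). apply Dn.
      apply is_derive_sum5; eauto.
      fixeq. cbv beta. replace sigma2 with (1 - sigma1) by lra. ring.
    - unfold h in Hc2. rewrite E0s, E0e, E0i, E0j, E0r, E0n in Hc2. lra. }
  set (Q := fun u => 0 < s u /\ 0 < e u /\ 0 < i u /\ 0 < j u).
  assert (Hrn : forall t, 0 < t <= T -> (forall u, 0 < u < t -> Q u) -> 0 <= r t /\ n t <= 1).
  { intros t Ht HQ. split.
    - destruct (mvt_within r (fun c => rho1 * i c + (1 - q) * rho2 * j c) 0 t) as [c [Hc1 Hc2]].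
      lra. apply CC; auto. intros c Hc; apply (Hder c ltac:(lra)).
      destruct (HQ c Hc1) as (_ & _ & Hic & Hjc).
      assert (0 <= (rho1 * i c + (1 - q) * rho2 * j c) * (t - 0)).
      { apply Rmult_le_pos; [|lra]. assert (0 <= (1-q)*rho2) by nra. nra. }
      lra.
    - destruct (mvt_within n (fun c => - q * rho2 * j c) 0 t) as [c [Hc1 Hc2]].
      lra. apply CC; auto. intros c Hc; apply (Hder c ltac:(lra)).
      destruct (HQ c Hc1) as (_ & _ & Hic & Hjc).
      assert (0 <= (q * rho2 * j c) * (t - 0)).
      { apply Rmult_le_pos; [|lra]. assert (0 <= q*rho2) by nra. nra. }
      assert (- q * rho2 * j c * (t - 0) = - (q * rho2 * j c * (t - 0))) by ring.
      lra. }
  assert (HQall : forall t, 0 <= t <= T -> Q t).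
  { apply cont_induction. lra.
    - unfold Q. rewrite E0s, E0e, E0i, E0j. auto.
    - intros t Ht HQ.
      assert (HQ' : forall u, 0 < u < t -> Q u) by (intros; apply HQ; lra).
      assert (Hle : forall c, 0 < c < t -> i c <= 1 /\ j c <= 1 /\ s c + e c + i c + j c <= 1).
      { intros c Hc. destruct (Hrn c ltac:(lra)) as [Hr Hn].
        intros u Hu; apply HQ'; lra.
        destruct (HQ' c Hc) as (? & ? & ? & ?). rewrite Hid in Hn by lra. lra. }
      unfold Q. split; [|split; [|split]].
      + apply (grow s (fun c => - s c * (beta1 * i c + beta2 * j c)) (beta1 + beta2) t).
        lra. apply CC; auto. intros c Hc; apply (Hder c ltac:(lra)).
        intros c Hc. destruct (Hle c Hc) as (? & ? & ?). destruct (HQ' c Hc) as (? & ? & ? & ?).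
        assert (0 <= s c * (beta1 * (1 - i c) + beta2 * (1 - j c))).
        { apply Rmult_le_pos. lra. nra. }
        nra. rewrite E0s; auto.
      + apply (grow e (fun c => s c * (beta1 * i c + beta2 * j c) - gamma * e c) gamma t).
        lra. apply CC; auto. intros c Hc; apply (Hder c ltac:(lra)).
        intros c Hc. destruct (HQ' c Hc) as (? & ? & ? & ?).
        assert (0 <= s c * (beta1 * i c + beta2 * j c)).
        { apply Rmult_le_pos. lra. nra. }
        nra. rewrite E0e; auto.
      + apply (grow i (fun c => sigma1 * gamma * e c - rho1 * i c) rho1 t).
        lra. apply CC; auto. intros c Hc; apply (Hder c ltac:(lra)).
        intros c Hc. destruct (HQ' c Hc) as (? & ? & ? & ?).
        assert (0 <= sigma1 * gamma * e c). { apply Rmult_le_pos; nra. }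
        nra. rewrite E0i; auto.
      + apply (grow j (fun c => sigma2 * gamma * e c - rho2 * j c) rho2 t).
        lra. apply CC; auto. intros c Hc; apply (Hder c ltac:(lra)).
        intros c Hc. destruct (HQ' c Hc) as (? & ? & ? & ?).
        assert (0 <= sigma2 * gamma * e c). { apply Rmult_le_pos; nra. }
        nra. rewrite E0j; auto.
    - intros t Ht (H1 & H2 & H3 & H4).
      destruct (contI_open 0 T s t 0 (s t + 1) cs ltac:(lra) ltac:(lra)) as [d1 [Hd1 D1]].
      destruct (contI_open 0 T e t 0 (e t + 1) ce ltac:(lra) ltac:(lra)) as [d2 [Hd2 D2]].
      destruct (contI_open 0 T i t 0 (i t + 1) ci ltac:(lra) ltac:(lra)) as [d3 [Hd3 D3]].
      destruct (contI_open 0 T j t 0 (j t + 1) cj ltac:(lra) ltac:(lra)) as [d4 [Hd4 D4]].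
      exists (Rmin (Rmin d1 d2) (Rmin d3 d4)). split.
      { repeat apply Rmin_case; auto. }
      intros u Hu.
      assert (Rmin (Rmin d1 d2) (Rmin d3 d4) <= d1) by (eapply Rle_trans; apply Rmin_l).
      assert (Rmin (Rmin d1 d2) (Rmin d3 d4) <= d2) by (eapply Rle_trans; [apply Rmin_l|apply Rmin_r]).
      assert (Rmin (Rmin d1 d2) (Rmin d3 d4) <= d3) by (eapply Rle_trans; [apply Rmin_r|apply Rmin_l]).
      assert (Rmin (Rmin d1 d2) (Rmin d3 d4) <= d4) by (eapply Rle_trans; apply Rmin_r).
      unfold Q. repeat split.
      apply (D1 u); lra. apply (D2 u); lra. apply (D3 u); lra. apply (D4 u); lra. }
  intros t Ht. split; [apply HQall; auto|].
  destruct (Req_dec t 0) as [->|Ht0].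
  - split. rewrite E0r; lra. split. apply Hid; lra. rewrite E0n; lra.
  - destruct (Hrn t ltac:(lra)) as [Hr Hn]. intros; apply HQall; lra.
    split; auto.
Qed.

End POS.

Lemma exp_mono x y : x <= y -> exp x <= exp y.
Proof. intros [H|H]. left; apply exp_increasing; auto. subst; lra. Qed.

Fixpoint sumd (d : nat) (f : nat -> R) : R :=
  match d with O => 0 | S d' => sumd d' f + f d' end.

Lemma sumd_le d f g : (forall k, f k <= g k) -> sumd d f <= sumd d g.
Proof. intros H. induction d; simpl. lra. specialize (H d). lra. Qed.

Lemma sumd_const d c : sumd d (fun _ => c) = INR d * c.
Proof. induction d; simpl sumd. simpl; ring. rewrite IHd, S_INR. ring. Qed.

Lemma geom_small eps : 0 < eps -> exists N, forall n, (n >= N)%nat -> (/2)^n < eps.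
Proof.
  intros He. destruct (pow_lt_1_zero (/2)) with eps as [N HN]; auto.
  rewrite Rabs_pos_eq; lra.
  exists N. intros n Hn. specialize (HN n Hn). rewrite Rabs_pos_eq in HN; auto.
  apply pow_le. lra.
Qed.

Lemma geom_le a b C : (forall n, a <= b + C * (/2)^n) -> a <= b.
Proof.
  intros H. apply Rle_plus_epsilon. intros eps He.
  assert (Hp : 0 < eps / (Rabs C + 1)). { apply Rdiv_lt_0_compat; auto. pose proof (Rabs_pos C); lra. }
  destruct (geom_small _ Hp) as [N HN]. specialize (HN N (le_n _)). specialize (H N).
  assert (C * (/2)^N <= Rabs C * (/2)^N).
  { apply Rmult_le_compat_r. apply pow_le; lra. apply Rle_abs. }
  assert (Rabs C * (/2)^N <= eps).
  { apply Rmult_lt_compat_l with (r := Rabs C + 1) in HN; [|pose proof (Rabs_pos C); lra].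
    unfold Rdiv in HN. rewrite (Rmult_comm eps), <- Rmult_assoc, Rinv_r, Rmult_1_l in HN by (pose proof (Rabs_pos C); lra).
    pose proof (pow_le (/2) N ltac:(lra)). nra. }
  lra.
Qed.

Lemma tele (u : nat -> R) B : (forall k, Rabs (u (S k) - u k) <= B * (/2)^k) ->
  forall n p, Rabs (u (n + p)%nat - u n) <= 2 * B * (/2)^n - 2 * B * (/2)^(n + p).
Proof.
  intros H n p. induction p.
  - rewrite Nat.add_0_r. unfold Rminus. rewrite Rplus_opp_r, Rabs_R0. lra.
  - rewrite Nat.add_succ_r. specialize (H (n + p)%nat).
    replace (u (S (n + p)) - u n) with ((u (S (n+p)) - u (n + p)%nat) + (u (n + p)%nat - u n)) by ring.
    eapply Rle_trans. apply Rabs_triang. simpl pow. lra.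
Qed.

Lemma ex_RInt_cont (f : R -> R) a b : (forall x, continuous f x) -> ex_RInt f a b.
Proof. intros H. apply (ex_RInt_continuous (V := R_CompleteNormedModule)). intros; apply H. Qed.

Lemma cont_of_derive (f : R -> R) x : ex_derive f x -> continuous f x.
Proof. intros H. apply (ex_derive_continuous (K := R_AbsRing) (V := R_NormedModule)). exact H. Qed.

Lemma RInt_bound (f : R -> R) a b M : (forall x, continuous f x) -> (forall x, Rabs (f x) <= M) ->
  Rabs (RInt f a b) <= M * Rabs (b - a).
Proof.
  intros Hc Hb.
  assert (Hex : forall a b, ex_RInt f a b) by (intros; apply ex_RInt_cont; auto).
  destruct (Rle_dec a b).
  - rewrite (Rabs_pos_eq (b - a)) by lra. rewrite Rmult_comm. apply abs_RInt_le_const; auto.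
  - rewrite <- opp_RInt_swap by auto. change (Rabs (- RInt f b a) <= M * Rabs (b - a)).
    rewrite Rabs_Ropp, (Rabs_left (b - a)) by lra. replace (- (b - a)) with (a - b) by ring.
    rewrite Rmult_comm. apply abs_RInt_le_const; auto. lra.
Qed.

Lemma RInt_diff (f : R -> R) a b : (forall x, continuous f x) -> RInt f 0 a - RInt f 0 b = RInt f b a.
Proof.
  intros Hc. assert (Hex : forall a b, ex_RInt f a b) by (intros; apply ex_RInt_cont; auto).
  rewrite <- (RInt_Chasles f 0 b a) by auto. change (RInt f 0 b + RInt f b a - RInt f 0 b = RInt f b a). ring.
Qed.

Lemma abs_cont (f : R -> R) x : continuous f x -> continuous (fun y => Rabs (f y)) x.
Proof.
  intros H. apply (continuous_comp f Rabs). auto.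
  apply lip_cont with 1. lra. intros y. rewrite Rmult_1_l. apply Rabs_triang_inv2.
Qed.

Lemma int_exp_bound h C M c : 0 < M -> 0 <= C -> 0 <= c -> (forall x, continuous h x) ->
  (forall t, 0 <= t <= c -> Rabs (h t) <= C * exp (M * t)) ->
  Rabs (RInt h 0 c) <= C / M * exp (M * c).
Proof.
  intros HM HC Hc Hh Hb.
  assert (Hg : forall x, continuous (fun t => C * exp (M * t)) x).
  { intros x. apply cont_of_derive. auto_derive. auto. }
  assert (HI : RInt (fun t => C * exp (M * t)) 0 c = C / M * exp (M * c) - C / M * exp (M * 0)).
  { apply is_RInt_unique.
    apply (is_RInt_derive (fun t => C / M * exp (M * t))).
    - intros x _. auto_derive. auto. field. lra.
    - intros x _. apply Hg. }
  eapply Rle_trans. apply abs_RInt_le; auto. apply ex_RInt_cont; auto.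
  eapply Rle_trans. apply (RInt_le (fun t => Rabs (h t)) (fun t => C * exp (M * t))); auto.
  apply ex_RInt_cont; intros; apply abs_cont; auto.
  apply ex_RInt_cont; auto.
  intros x Hx. apply Hb. lra.
  rewrite HI. rewrite Rmult_0_r, exp_0. 
  assert (0 <= C / M) by (apply Rdiv_le_0_compat; lra). lra.
Qed.

Section Picard.
Variables (d : nat) (G : nat -> (nat -> R) -> R) (x0 : nat -> R) (T Mb L : R).
Hypotheses (HT : 0 < T) (HMb : 0 <= Mb) (HL : 0 < L) (Hd : (0 < d)%nat)
  (HGb : forall m y, Rabs (G m y) <= Mb)
  (HGL : forall m y z, Rabs (G m y - G m z) <= L * sumd d (fun k => Rabs (y k - z k))).

Lemma Gcomp_cont (y : R -> nat -> R) K m t : 0 <= K ->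
  (forall k t t', Rabs (y t k - y t' k) <= K * Rabs (t - t')) ->
  continuous (fun u => G m (y u)) t.
Proof.
  intros HK Hy. apply lip_cont with (L * (INR d * K)).
  apply Rmult_le_pos. lra. apply Rmult_le_pos. apply pos_INR. auto.
  intros u. eapply Rle_trans. apply HGL.
  replace (L * (INR d * K) * Rabs (u - t)) with (L * (INR d * (K * Rabs (u - t)))) by ring.
  rewrite <- sumd_const. apply Rmult_le_compat_l. lra.
  apply sumd_le. intros k. apply Hy.
Qed.

Fixpoint it (k : nat) : R -> nat -> R :=
  match k with
  | O => fun _ => x0
  | S k' => fun t m => x0 m + RInt (fun u => G m (it k' u)) 0 (clamp 0 T t)
  end.

Lemma it_lip k : forall m t t', Rabs (it k t m - it k t' m) <= Mb * Rabs (t - t').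
Proof.
  induction k; intros m t t'; simpl.
  - unfold Rminus. rewrite Rplus_opp_r, Rabs_R0. apply Rmult_le_pos; auto. apply Rabs_pos.
  - assert (Hc : forall x, continuous (fun u => G m (it k u)) x).
    { intros x. apply Gcomp_cont with Mb; auto. }
    replace (x0 m + RInt (fun u => G m (it k u)) 0 (clamp 0 T t) -
      (x0 m + RInt (fun u => G m (it k u)) 0 (clamp 0 T t')))
      with (RInt (fun u => G m (it k u)) 0 (clamp 0 T t) - RInt (fun u => G m (it k u)) 0 (clamp 0 T t')) by ring.
    rewrite RInt_diff by auto.
    eapply Rle_trans. apply RInt_bound; auto.
    apply Rmult_le_compat_l; auto. apply clamp_lip. lra.
Qed.

Lemma it_cont k m x : continuous (fun u => G m (it k u)) x.
Proof. apply Gcomp_cont with Mb; auto. intros; apply it_lip. Qed.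

Definition Mexp := 2 * L * INR d.
Definition A := Mb * T.

Lemma Mexp_pos : 0 < Mexp.
Proof. unfold Mexp. apply lt_0_INR in Hd. nra. Qed.

Lemma it_diff k : forall m t, Rabs (it (S k) t m - it k t m) <= A * (/2)^k * exp (Mexp * clamp 0 T t).
Proof.
  pose proof Mexp_pos as HM.
  induction k; intros m t.
  - simpl. assert (Ee : forall a b : R, a + b - a = b) by (intros; ring). rewrite Ee.
    eapply Rle_trans. apply RInt_bound. intros; apply continuous_const. intros; apply HGb.
    pose proof (clamp_in 0 T t ltac:(lra)).
    assert (1 <= exp (Mexp * clamp 0 T t)).
    { rewrite <- exp_0. apply exp_mono. apply Rmult_le_pos; lra. }
    unfold A. rewrite Rminus_0_r, Rabs_pos_eq by lra.
    assert (Mb * clamp 0 T t <= Mb * T) by (apply Rmult_le_compat_l; lra).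
    assert (0 <= Mb * T) by nra. nra.
  - assert (E : it (S (S k)) t m - it (S k) t m =
      RInt (fun u => G m (it (S k) u) - G m (it k u)) 0 (clamp 0 T t)).
    { simpl it at 1. simpl it at 2.
      rewrite (RInt_minus (fun u => G m (it (S k) u)) (fun u => G m (it k u))).
      change (x0 m + RInt (fun u => G m (it (S k) u)) 0 (clamp 0 T t) -
        (x0 m + RInt (fun u => G m (it k u)) 0 (clamp 0 T t)) =
        RInt (fun u => G m (it (S k) u)) 0 (clamp 0 T t) - RInt (fun u => G m (it k u)) 0 (clamp 0 T t)).
      ring.
      apply ex_RInt_cont; intros; apply it_cont.
      apply ex_RInt_cont; intros; apply it_cont. }
    rewrite E.
    pose proof (clamp_in 0 T t ltac:(lra)) as Hcl.
    replace (A * (/2)^(S k)) with ((L * INR d * (A * (/2)^k)) / Mexp).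
    2:{ unfold Mexp. simpl pow. apply lt_0_INR in Hd. field. split; lra. }
    apply int_exp_bound; auto.
    + unfold A. apply Rmult_le_pos. apply Rmult_le_pos. lra. apply pos_INR.
      apply Rmult_le_pos. nra. apply pow_le. lra.
    + lra.
    + intros x. apply (continuous_minus (fun u => G m (it (S k) u)) (fun u => G m (it k u))); apply it_cont.
    + intros u Hu. eapply Rle_trans. apply HGL.
      replace (L * INR d * (A * (/ 2) ^ k) * exp (Mexp * u)) with (L * (INR d * (A * (/ 2) ^ k * exp (Mexp * u)))) by ring.
      apply Rmult_le_compat_l. lra.
      rewrite <- sumd_const. apply sumd_le. intros k'.
      eapply Rle_trans. apply IHk. rewrite (clamp_id 0 T u) by lra. lra.
Qed.

Definition B := A * exp (Mexp * T).

Lemma B_nonneg : 0 <= B.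
Proof. unfold B, A. apply Rmult_le_pos. nra. left; apply exp_pos. Qed.

Lemma it_diffB k m t : Rabs (it (S k) t m - it k t m) <= B * (/2)^k.
Proof.
  eapply Rle_trans. apply it_diff. unfold B.
  pose proof (clamp_in 0 T t ltac:(lra)). pose proof Mexp_pos.
  assert (exp (Mexp * clamp 0 T t) <= exp (Mexp * T)).
  { apply exp_mono. apply Rmult_le_compat_l; lra. }
  assert (0 <= A * (/2)^k). { apply Rmult_le_pos. unfold A; nra. apply pow_le; lra. }
  replace (A * exp (Mexp * T) * (/2)^k) with (A * (/2)^k * exp (Mexp * T)) by ring.
  apply Rmult_le_compat_l; auto.
Qed.

Lemma it_tele t m n p : Rabs (it (n + p) t m - it n t m) <= 2 * B * (/2)^n.
Proof.
  pose proof (tele (fun k => it k t m) B (fun k => it_diffB k m t) n p). simpl in H.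
  pose proof B_nonneg. pose proof (pow_le (/2) (n + p) ltac:(lra)). nra.
Qed.

Lemma it_cauchy t m : ex_lim_seq_cauchy (fun k => it k t m).
Proof.
  intros [eps He]; simpl.
  pose proof B_nonneg.
  assert (Hp : 0 < eps / (4 * B + 1)) by (apply Rdiv_lt_0_compat; lra).
  destruct (geom_small _ Hp) as [N HN]. specialize (HN N (le_n _)).
  exists N. intros n n' Hn Hn'.
  pose proof (it_tele t m N (n - N)) as H1. pose proof (it_tele t m N (n' - N)) as H2.
  replace (N + (n - N))%nat with n in H1 by lia. replace (N + (n' - N))%nat with n' in H2 by lia.
  replace (it n t m - it n' t m) with ((it n t m - it N t m) - (it n' t m - it N t m)) by ring.
  eapply Rle_lt_trans. apply Rabs_triang. rewrite Rabs_Ropp.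
  assert (4 * B * (/2)^N < eps).
  { apply Rmult_lt_compat_l with (r := 4 * B + 1) in HN; [|lra].
    unfold Rdiv in HN. rewrite (Rmult_comm eps), <- Rmult_assoc, Rinv_r, Rmult_1_l in HN by lra.
    pose proof (pow_le (/2) N ltac:(lra)). nra. }
  lra.
Qed.

Definition xl (t : R) (m : nat) : R := Lim_seq (fun k => it k t m).

Lemma xl_lim t m : is_lim_seq (fun k => it k t m) (xl t m).
Proof. apply Lim_seq_correct'. apply ex_lim_seq_cauchy_corr. apply it_cauchy. Qed.

Lemma xl_close t m n : Rabs (xl t m - it n t m) <= 2 * B * (/2)^n.
Proof.
  apply Rle_plus_epsilon. intros eps He.
  pose proof (xl_lim t m) as HL'. apply is_lim_seq_spec in HL'.
  destruct (HL' (mkposreal _ He)) as [N HN]. simpl in HN.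
  specialize (HN (N + n)%nat ltac:(lia)).
  pose proof (it_tele t m n N). replace (n + N)%nat with (N + n)%nat in H by lia.
  replace (xl t m - it n t m) with (-(it (N + n) t m - xl t m) + (it (N + n) t m - it n t m)) by ring.
  eapply Rle_trans. apply Rabs_triang. rewrite Rabs_Ropp. lra.
Qed.

Lemma xl_lip m t t' : Rabs (xl t m - xl t' m) <= Mb * Rabs (t - t').
Proof.
  apply geom_le with (4 * B). intros n.
  replace (xl t m - xl t' m) with ((xl t m - it n t m) + (it n t m - it n t' m) - (xl t' m - it n t' m)) by ring.
  eapply Rle_trans. apply Rabs_triang. rewrite Rabs_Ropp.
  eapply Rle_trans. apply Rplus_le_compat_r. apply Rabs_triang.
  pose proof (xl_close t m n). pose proof (xl_close t' m n). pose proof (it_lip n m t t'). lra.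
Qed.

Lemma xl_cont m x : continuous (fun u => G m (xl u)) x.
Proof. apply Gcomp_cont with Mb; auto. intros; apply xl_lip. Qed.

Lemma xl_int m t : 0 <= t <= T -> xl t m = x0 m + RInt (fun u => G m (xl u)) 0 t.
Proof.
  intros Ht.
  assert (Habs : Rabs (xl t m - (x0 m + RInt (fun u => G m (xl u)) 0 t)) <= 0).
  { apply geom_le with (2 * B + T * (L * (INR d * (2 * B)))). intros n.
    assert (E : it (S n) t m = x0 m + RInt (fun u => G m (it n u)) 0 t).
    { simpl. rewrite clamp_id by lra. reflexivity. }
    replace (xl t m - (x0 m + RInt (fun u => G m (xl u)) 0 t)) with
      ((xl t m - it (S n) t m) + RInt (fun u => G m (it n u) - G m (xl u)) 0 t).
    2:{ rewrite E. rewrite (RInt_minus (fun u => G m (it n u)) (fun u => G m (xl u))).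
        change (xl t m - (x0 m + RInt (fun u => G m (it n u)) 0 t) +
          (RInt (fun u => G m (it n u)) 0 t - RInt (fun u => G m (xl u)) 0 t) = 
          xl t m - (x0 m + RInt (fun u => G m (xl u)) 0 t)). ring.
        apply ex_RInt_cont; intros; apply it_cont.
        apply ex_RInt_cont; intros; apply xl_cont. }
    eapply Rle_trans. apply Rabs_triang.
    pose proof (xl_close t m (S n)) as H1. simpl pow in H1.
    assert (H2 : Rabs (RInt (fun u => G m (it n u) - G m (xl u)) 0 t) <= (t - 0) * (L * (INR d * (2 * B * (/2)^n)))).
    { apply abs_RInt_le_const. lra.
      apply ex_RInt_cont; intros.
      apply (continuous_minus (fun u => G m (it n u)) (fun u => G m (xl u))). apply it_cont. apply xl_cont.
      intros u Hu. eapply Rle_trans. apply HGL. apply Rmult_le_compat_l. lra.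
      rewrite <- sumd_const. apply sumd_le. intros k. rewrite <- Rabs_Ropp.
      replace (- (it n u k - xl u k)) with (xl u k - it n u k) by ring. apply xl_close. }
    pose proof B_nonneg. pose proof (pow_le (/2) n ltac:(lra)).
    assert (0 <= L * (INR d * (2 * B * (/2)^n))).
    { apply Rmult_le_pos. lra. apply Rmult_le_pos. apply pos_INR. nra. }
    assert ((t - 0) * (L * (INR d * (2 * B * (/2)^n))) <= T * (L * (INR d * (2 * B * (/2)^n)))).
    { apply Rmult_le_compat_r; lra. }
    replace ((2 * B + T * (L * (INR d * (2 * B)))) * (/2)^n) with
      (2 * B * (/2)^n + T * (L * (INR d * (2 * B * (/2)^n)))) by ring.
    assert (2 * B * (/ 2 * (/ 2) ^ n) <= 2 * B * (/2)^n) by nra.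
    lra. }
  pose proof (Rabs_pos (xl t m - (x0 m + RInt (fun u => G m (xl u)) 0 t))).
  assert (Rabs (xl t m - (x0 m + RInt (fun u => G m (xl u)) 0 t)) = 0) by lra.
  apply Rabs_eq_0 in H0. lra.
Qed.

Lemma picard : exists y : R -> nat -> R,
  (forall m t t', Rabs (y t m - y t' m) <= Mb * Rabs (t - t')) /\
  (forall m, y 0 m = x0 m) /\
  (forall m t, 0 < t < T -> is_derive (fun u => y u m) t (G m (y t))).
Proof.
  exists xl. split; [|split].
  - apply xl_lip.
  - intros m. rewrite xl_int by lra. rewrite RInt_point. change (x0 m + 0 = x0 m). ring.
  - intros m t Ht.
    apply is_derive_ext_loc with (fun u => x0 m + RInt (fun u => G m (xl u)) 0 u).
    + assert (He : 0 < Rmin t (T - t)) by (apply Rmin_case; lra).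
      exists (mkposreal _ He). intros y Hy.
      unfold ball in Hy; simpl in Hy; unfold AbsRing_ball, abs, minus, plus, opp in Hy; simpl in Hy.
      symmetry. apply xl_int.
      revert Hy. apply Rmin_case_strong; intros; unfold Rabs in *; destruct Rcase_abs; lra.
    + eapply is_derive_eq.
      apply (is_derive_add (fun _ => x0 m) (fun b => RInt (fun u => G m (xl u)) 0 b)).
      apply is_derive_const.
      apply (is_derive_RInt (fun u => G m (xl u)) (fun b => RInt (fun u => G m (xl u)) 0 b) 0 t).
      * exists (mkposreal _ Rlt_0_1). intros b _. apply (RInt_correct (V := R_CompleteNormedModule)).
        apply ex_RInt_cont; intros; apply xl_cont.
      * apply xl_cont.
      * fixeq. change (0 + G m (xl t) = G m (xl t)). ring.
Qed.

End Picard.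

Definition c01 := clamp 0 1.

Lemma c01_in x : 0 <= c01 x <= 1.
Proof. apply clamp_in. lra. Qed.
Lemma c01_lip x y : Rabs (c01 x - c01 y) <= Rabs (x - y).
Proof. apply clamp_lip. lra. Qed.

Lemma prod_lip a a' u u' U : 0 <= a <= 1 -> 0 <= a' <= 1 -> 0 <= u <= U ->
  Rabs (a * u - a' * u') <= U * Rabs (a - a') + Rabs (u - u').
Proof.
  intros Ha Ha' Hu.
  replace (a * u - a' * u') with ((a - a') * u + a' * (u - u')) by ring.
  eapply Rle_trans. apply Rabs_triang. rewrite !Rabs_mult.
  rewrite (Rabs_pos_eq u), (Rabs_pos_eq a') by lra.
  pose proof (Rabs_pos (a - a')). pose proof (Rabs_pos (u - u')).
  nra.
Qed.

Lemma abs_lin2 p r x w : Rabs (p * x + r * w) <= Rabs p * Rabs x + Rabs r * Rabs w.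
Proof. eapply Rle_trans. apply Rabs_triang. rewrite !Rabs_mult. lra. Qed.

Section Final.
Variables (beta1 beta2 gamma rho1 rho2 sigma1 sigma2 q : R).
Hypotheses (Hb1 : 0 < beta1) (Hb2 : 0 < beta2) (Hg : 0 < gamma)
  (Hr1 : 0 < rho1) (Hr2 : 0 < rho2)
  (Hs1 : 0 < sigma1) (Hs2 : 0 < sigma2) (Hsig : sigma1 + sigma2 = 1)
  (Hq : 0 <= q <= 1).

Definition Gf (m : nat) (y : nat -> R) : R :=
  match m with
  | 0 => - c01 (y 0%nat) * (beta1 * c01 (y 2%nat) + beta2 * c01 (y 3%nat))
  | 1 => c01 (y 0%nat) * (beta1 * c01 (y 2%nat) + beta2 * c01 (y 3%nat)) - gamma * c01 (y 1%nat)
  | 2 => sigma1 * gamma * c01 (y 1%nat) - rho1 * c01 (y 2%nat)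
  | 3 => sigma2 * gamma * c01 (y 1%nat) - rho2 * c01 (y 3%nat)
  | 4 => rho1 * c01 (y 2%nat) + (1 - q) * rho2 * c01 (y 3%nat)
  | _ => 0
  end.

Definition K0 := beta1 + beta2 + gamma + rho1 + rho2.

Lemma K0_pos : 0 < K0.
Proof. unfold K0; lra. Qed.

Lemma Gf_bound m y : Rabs (Gf m y) <= K0.
Proof.
  pose proof (c01_in (y 0%nat)). pose proof (c01_in (y 1%nat)).
  pose proof (c01_in (y 2%nat)). pose proof (c01_in (y 3%nat)).
  set (a0 := c01 (y 0%nat)) in *. set (a1 := c01 (y 1%nat)) in *.
  set (a2 := c01 (y 2%nat)) in *. set (a3 := c01 (y 3%nat)) in *.
  assert (0 <= beta1 * a2 + beta2 * a3 <= beta1 + beta2) by nra.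
  assert (0 <= a0 * (beta1 * a2 + beta2 * a3) <= beta1 + beta2) by nra.
  assert (0 <= sigma1 * a1 <= 1) by (split; nra).
  assert (0 <= sigma1 * gamma * a1 <= gamma) by (replace (sigma1 * gamma * a1) with (gamma * (sigma1 * a1)) by ring; split; nra).
  assert (0 <= sigma2 * a1 <= 1) by (split; nra).
  assert (0 <= sigma2 * gamma * a1 <= gamma) by (replace (sigma2 * gamma * a1) with (gamma * (sigma2 * a1)) by ring; split; nra).
  assert (0 <= gamma * a1 <= gamma) by nra.
  assert (0 <= rho1 * a2 <= rho1) by nra.
  assert (0 <= rho2 * a3 <= rho2) by nra.
  assert (0 <= (1 - q) * a3 <= 1) by (split; nra).
  assert (0 <= (1 - q) * rho2 * a3 <= rho2) by (replace ((1 - q) * rho2 * a3) with (rho2 * ((1 - q) * a3)) by ring; split; nra).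
  unfold K0.
  destruct m as [|[|[|[|[|m]]]]]; simpl Gf; apply Rabs_le; split; fold a0 a1 a2 a3; lra.
Qed.

Lemma Gf_lip m y z : Rabs (Gf m y - Gf m z) <= K0 * sumd 4 (fun k => Rabs (y k - z k)).
Proof.
  pose proof (c01_in (y 0%nat)). pose proof (c01_in (y 1%nat)).
  pose proof (c01_in (y 2%nat)). pose proof (c01_in (y 3%nat)).
  pose proof (c01_in (z 0%nat)). pose proof (c01_in (z 1%nat)).
  pose proof (c01_in (z 2%nat)). pose proof (c01_in (z 3%nat)).
  pose proof (c01_lip (y 0%nat) (z 0%nat)). pose proof (c01_lip (y 1%nat) (z 1%nat)).
  pose proof (c01_lip (y 2%nat) (z 2%nat)). pose proof (c01_lip (y 3%nat) (z 3%nat)).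
  pose proof (Rabs_pos (y 0%nat - z 0%nat)). pose proof (Rabs_pos (y 1%nat - z 1%nat)).
  pose proof (Rabs_pos (y 2%nat - z 2%nat)). pose proof (Rabs_pos (y 3%nat - z 3%nat)).
  simpl sumd. unfold K0.
  set (a0 := c01 (y 0%nat)) in *. set (a1 := c01 (y 1%nat)) in *.
  set (a2 := c01 (y 2%nat)) in *. set (a3 := c01 (y 3%nat)) in *.
  set (b0 := c01 (z 0%nat)) in *. set (b1 := c01 (z 1%nat)) in *.
  set (b2 := c01 (z 2%nat)) in *. set (b3 := c01 (z 3%nat)) in *.
  set (D0 := Rabs (y 0%nat - z 0%nat)) in *. set (D1 := Rabs (y 1%nat - z 1%nat)) in *.
  set (D2 := Rabs (y 2%nat - z 2%nat)) in *. set (D3 := Rabs (y 3%nat - z 3%nat)) in *.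
  assert (Hu : Rabs ((beta1 * a2 + beta2 * a3) - (beta1 * b2 + beta2 * b3)) <= beta1 * D2 + beta2 * D3).
  { replace ((beta1 * a2 + beta2 * a3) - (beta1 * b2 + beta2 * b3)) with (beta1 * (a2 - b2) + beta2 * (a3 - b3)) by ring.
    eapply Rle_trans. apply abs_lin2. rewrite (Rabs_pos_eq beta1), (Rabs_pos_eq beta2) by lra. nra. }
  assert (Hp : Rabs (a0 * (beta1 * a2 + beta2 * a3) - b0 * (beta1 * b2 + beta2 * b3)) <=
     (beta1 + beta2) * Rabs (a0 - b0) + (beta1 * D2 + beta2 * D3)).
  { eapply Rle_trans. apply (prod_lip _ _ _ _ (beta1 + beta2)); auto. split; nra. lra. }
  destruct m as [|[|[|[|[|m]]]]]; simpl Gf; fold a0 a1 a2 a3 b0 b1 b2 b3.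
  - replace (- a0 * (beta1 * a2 + beta2 * a3) - - b0 * (beta1 * b2 + beta2 * b3)) with
      (- (a0 * (beta1 * a2 + beta2 * a3) - b0 * (beta1 * b2 + beta2 * b3))) by ring.
    rewrite Rabs_Ropp. nra.
  - replace (a0 * (beta1 * a2 + beta2 * a3) - gamma * a1 - (b0 * (beta1 * b2 + beta2 * b3) - gamma * b1)) with
      ((a0 * (beta1 * a2 + beta2 * a3) - b0 * (beta1 * b2 + beta2 * b3)) + (- gamma) * (a1 - b1)) by ring.
    eapply Rle_trans. apply Rabs_triang. rewrite Rabs_mult, Rabs_Ropp, (Rabs_pos_eq gamma) by lra. nra.
  - replace (sigma1 * gamma * a1 - rho1 * a2 - (sigma1 * gamma * b1 - rho1 * b2)) with
      ((sigma1 * gamma) * (a1 - b1) + (- rho1) * (a2 - b2)) by ring.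
    eapply Rle_trans. apply abs_lin2. rewrite Rabs_Ropp, (Rabs_pos_eq rho1), (Rabs_pos_eq (sigma1 * gamma)) by nra.
    pose proof (Rabs_pos (a1 - b1)).
    assert (sigma1 * Rabs (a1 - b1) <= D1) by nra.
    assert (sigma1 * gamma * Rabs (a1 - b1) <= gamma * D1) by (replace (sigma1 * gamma * Rabs (a1 - b1)) with (gamma * (sigma1 * Rabs (a1 - b1))) by ring; nra). nra.
  - replace (sigma2 * gamma * a1 - rho2 * a3 - (sigma2 * gamma * b1 - rho2 * b3)) with
      ((sigma2 * gamma) * (a1 - b1) + (- rho2) * (a3 - b3)) by ring.
    eapply Rle_trans. apply abs_lin2. rewrite Rabs_Ropp, (Rabs_pos_eq rho2), (Rabs_pos_eq (sigma2 * gamma)) by nra.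
    pose proof (Rabs_pos (a1 - b1)).
    assert (sigma2 * Rabs (a1 - b1) <= D1) by nra.
    assert (sigma2 * gamma * Rabs (a1 - b1) <= gamma * D1) by (replace (sigma2 * gamma * Rabs (a1 - b1)) with (gamma * (sigma2 * Rabs (a1 - b1))) by ring; nra). nra.
  - replace (rho1 * a2 + (1 - q) * rho2 * a3 - (rho1 * b2 + (1 - q) * rho2 * b3)) with
      (rho1 * (a2 - b2) + ((1 - q) * rho2) * (a3 - b3)) by ring.
    eapply Rle_trans. apply abs_lin2. rewrite (Rabs_pos_eq rho1), (Rabs_pos_eq ((1 - q) * rho2)) by nra.
    pose proof (Rabs_pos (a3 - b3)).
    assert ((1 - q) * Rabs (a3 - b3) <= D3) by nra.
    assert ((1 - q) * rho2 * Rabs (a3 - b3) <= rho2 * D3) by (replace ((1 - q) * rho2 * Rabs (a3 - b3)) with (rho2 * ((1 - q) * Rabs (a3 - b3))) by ring; nra). nra.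
  - rewrite Rminus_0_r, Rabs_R0. nra.
Qed.

End Final.

Lemma cont_contI a b f : (forall t, continuous f t) -> contI a b f.
Proof. intros H t _. eapply filterlim_filter_le_1. apply filter_le_within. apply H. Qed.

Theorem lemma1
  (beta1 beta2 gamma rho1 rho2 sigma1 sigma2 q T s0 e0 i0 j0 r0 : R)
  (Hb1 : 0 < beta1) (Hb2 : 0 < beta2) (Hg : 0 < gamma)
  (Hr1 : 0 < rho1) (Hr2 : 0 < rho2)
  (Hs1 : 0 < sigma1) (Hs2 : 0 < sigma2) (Hsig : sigma1 + sigma2 = 1)
  (Hq : 0 <= q <= 1) (HT : 0 < T)
  (Hs0 : 0 < s0) (He0 : 0 < e0) (Hi0 : 0 < i0) (Hj0 : 0 < j0) (Hr0 : 0 <= r0)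
  (Hsum : s0 + e0 + i0 + j0 + r0 = 1) :
  (exists s e i j r n : R -> R,
     is_solution beta1 beta2 gamma rho1 rho2 sigma1 sigma2 q T
                 s0 e0 i0 j0 r0 s e i j r n) /\
  (forall s e i j r n : R -> R,
     is_solution beta1 beta2 gamma rho1 rho2 sigma1 sigma2 q T
                 s0 e0 i0 j0 r0 s e i j r n ->
     (pos_on T s /\ pos_on T e /\ pos_on T i /\ pos_on T j /\
      pos_on T r /\ pos_on T n) /\
     (bounded_on T s /\ bounded_on T e /\ bounded_on T i /\ bounded_on T j /\
      bounded_on T r /\ bounded_on T n)).
Proof.
  pose proof (POS beta1 beta2 gamma rho1 rho2 sigma1 sigma2 q s0 e0 i0 j0 r0
    Hb1 Hb2 Hg Hr1 Hr2 Hs1 Hs2 Hsig Hq Hs0 He0 Hi0 Hj0 Hr0 Hsum) as HPOS.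
  split.
  - set (G := Gf beta1 beta2 gamma rho1 rho2 sigma1 sigma2 q).
    set (x0 := fun m : nat => match m with 0 => s0 | 1 => e0 | 2 => i0 | 3 => j0 | 4 => r0 | _ => 0 end).
    set (K := K0 beta1 beta2 gamma rho1 rho2).
    assert (HK : 0 < K) by (unfold K, K0; lra).
    destruct (picard 4 G x0 T K K HT ltac:(lra) HK ltac:(lia)) as [y [Hlip [Hy0 Hder]]].
    { intros m z. apply Gf_bound; auto. }
    { intros m z z'. apply Gf_lip; auto. }
    assert (Hc : forall k t, continuous (fun u => y u k) t).
    { intros k t. apply lip_cont with K. lra. intros u. apply Hlip. }
    set (nf := fun u => y u 0%nat + y u 1%nat + y u 2%nat + y u 3%nat + y u 4%nat).
    set (Q := fun u => (0 < y u 0%nat < 1) /\ (0 < y u 1%nat < 1) /\ (0 < y u 2%nat < 1) /\ (0 < y u 3%nat < 1)).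
    assert (Hsol : forall t, 0 < t <= T -> (forall u, 0 < u < t -> Q u) ->
      is_solution beta1 beta2 gamma rho1 rho2 sigma1 sigma2 q t s0 e0 i0 j0 r0
        (fun u => y u 0%nat) (fun u => y u 1%nat) (fun u => y u 2%nat) (fun u => y u 3%nat)
        (fun u => y u 4%nat) nf).
    { intros t Ht HQ.
      assert (Hcn : forall t, continuous nf t).
      { intros t'. unfold nf.
        apply (continuous_plus (fun u => y u 0%nat + y u 1%nat + y u 2%nat + y u 3%nat) (fun u => y u 4%nat)); auto.
        apply (continuous_plus (fun u => y u 0%nat + y u 1%nat + y u 2%nat) (fun u => y u 3%nat)); auto.
        apply (continuous_plus (fun u => y u 0%nat + y u 1%nat) (fun u => y u 2%nat)); auto.
        apply (continuous_plus (fun u => y u 0%nat) (fun u => y u 1%nat)); auto. }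
      split. apply cont_contI; auto.
      split. apply cont_contI; auto.
      split. apply cont_contI; auto.
      split. apply cont_contI; auto.
      split. apply cont_contI; auto.
      split. apply cont_contI; auto.
      split.
      + intros u Hu. destruct (HQ u Hu) as (Q0 & Q1 & Q2 & Q3).
        assert (Hu' : 0 < u < T) by lra.
        pose proof (Hder 0%nat u Hu') as D0. pose proof (Hder 1%nat u Hu') as D1.
        pose proof (Hder 2%nat u Hu') as D2. pose proof (Hder 3%nat u Hu') as D3.
        pose proof (Hder 4%nat u Hu') as D4.
        unfold G, Gf, c01 in D0, D1, D2, D3, D4.
        rewrite ?(clamp_id 0 1 (y u 0%nat)), ?(clamp_id 0 1 (y u 1%nat)), ?(clamp_id 0 1 (y u 2%nat)), ?(clamp_id 0 1 (y u 3%nat)) in D0 by lra.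
        rewrite ?(clamp_id 0 1 (y u 0%nat)), ?(clamp_id 0 1 (y u 1%nat)), ?(clamp_id 0 1 (y u 2%nat)), ?(clamp_id 0 1 (y u 3%nat)) in D1 by lra.
        rewrite ?(clamp_id 0 1 (y u 0%nat)), ?(clamp_id 0 1 (y u 1%nat)), ?(clamp_id 0 1 (y u 2%nat)), ?(clamp_id 0 1 (y u 3%nat)) in D2 by lra.
        rewrite ?(clamp_id 0 1 (y u 0%nat)), ?(clamp_id 0 1 (y u 1%nat)), ?(clamp_id 0 1 (y u 2%nat)), ?(clamp_id 0 1 (y u 3%nat)) in D3 by lra.
        rewrite ?(clamp_id 0 1 (y u 0%nat)), ?(clamp_id 0 1 (y u 1%nat)), ?(clamp_id 0 1 (y u 2%nat)), ?(clamp_id 0 1 (y u 3%nat)) in D4 by lra.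
        split; [exact D0|]. split; [exact D1|]. split; [exact D2|]. split; [exact D3|]. split; [exact D4|].
        unfold nf. eapply is_derive_eq. apply is_derive_sum5; eauto.
        fixeq. replace sigma2 with (1 - sigma1) by lra. ring.
      + rewrite !Hy0. unfold nf. rewrite !Hy0. simpl. repeat split; auto. }
    assert (HQall : forall t, 0 <= t <= T -> Q t).
    { apply cont_induction. lra.
      - unfold Q. rewrite !Hy0. simpl. repeat split; lra.
      - intros t Ht HQ.
        destruct (HPOS t _ _ _ _ _ _ ltac:(lra) (Hsol t Ht (fun u Hu => HQ u ltac:(lra))) t ltac:(lra))
          as ((P0 & P1 & P2 & P3) & Pr & Pn & Pn1).
        unfold nf in Pn, Pn1. unfold Q. repeat split; lra.
      - intros t Ht (H1 & H2 & H3 & H4).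
        destruct (contI_open 0 T (fun u => y u 0%nat) t 0 1 (cont_contI _ _ _ (Hc 0%nat)) ltac:(lra) H1) as [d1 [Hd1 D1]].
        destruct (contI_open 0 T (fun u => y u 1%nat) t 0 1 (cont_contI _ _ _ (Hc 1%nat)) ltac:(lra) H2) as [d2 [Hd2 D2]].
        destruct (contI_open 0 T (fun u => y u 2%nat) t 0 1 (cont_contI _ _ _ (Hc 2%nat)) ltac:(lra) H3) as [d3 [Hd3 D3]].
        destruct (contI_open 0 T (fun u => y u 3%nat) t 0 1 (cont_contI _ _ _ (Hc 3%nat)) ltac:(lra) H4) as [d4 [Hd4 D4]].
        exists (Rmin (Rmin d1 d2) (Rmin d3 d4)). split.
        { repeat apply Rmin_case; auto. }
        intros u Hu.
        assert (Rmin (Rmin d1 d2) (Rmin d3 d4) <= d1) by (eapply Rle_trans; apply Rmin_l).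
        assert (Rmin (Rmin d1 d2) (Rmin d3 d4) <= d2) by (eapply Rle_trans; [apply Rmin_l|apply Rmin_r]).
        assert (Rmin (Rmin d1 d2) (Rmin d3 d4) <= d3) by (eapply Rle_trans; [apply Rmin_r|apply Rmin_l]).
        assert (Rmin (Rmin d1 d2) (Rmin d3 d4) <= d4) by (eapply Rle_trans; apply Rmin_r).
        unfold Q. split; [|split; [|split]].
        apply (D1 u); lra. apply (D2 u); lra. apply (D3 u); lra. apply (D4 u); lra. }
    exists (fun u => y u 0%nat), (fun u => y u 1%nat), (fun u => y u 2%nat), (fun u => y u 3%nat),
      (fun u => y u 4%nat), nf.
    apply Hsol. lra. intros u Hu. apply HQall. lra.
  - intros s e i j r n Hs.
    pose proof (HPOS T s e i j r n HT Hs) as HP.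
    assert (Hrpos : forall t, 0 < t <= T -> 0 < r t).
    { intros t Ht.
      destruct Hs as (cs & ce & ci & cj & cr & cn & Hder & E0s & E0e & E0i & E0j & E0r & E0n).
      destruct (mvt_within r (fun c => rho1 * i c + (1 - q) * rho2 * j c) 0 t) as [c [Hc1 Hc2]].
      lra. apply contI_ccont. lra. apply contI_sub with 0 T; auto; lra.
      intros c Hc; apply (Hder c ltac:(lra)).
      destruct (HP c ltac:(lra)) as ((_ & _ & Hic & Hjc) & _).
      assert (0 < (rho1 * i c + (1 - q) * rho2 * j c) * (t - 0)).
      { apply Rmult_lt_0_compat; [|lra]. assert (0 <= (1-q)*rho2) by nra. nra. }
      destruct (HP 0 ltac:(lra)) as (_ & Hr0' & _). lra. }
    split.
    + repeat split; intros t Ht; destruct (HP t ltac:(lra)) as ((P0 & P1 & P2 & P3) & Pr & Pn & Pn1); auto.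
      specialize (Hrpos t Ht). lra.
    + repeat split; exists 1; intros t Ht; destruct (HP t ltac:(lra)) as ((P0 & P1 & P2 & P3) & Pr & Pn & Pn1);
        apply Rabs_le; lra.
Qed.
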